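(* Let $G$ be a finite abstract simplicial complex. Then $w(B(x))=1$ for every $x \in G$.
   Context: A finite abstract simplicial complex $G$ is a finite set of non-empty finite sets such that every non-empty subset of an element of $G$ is again in $G$. For $y\in G$, $w(y)=(-1)^{|y|-1}$, and for $A\subset G$, $w(A)=\sum_{y\in A}w(y)$. $G$ carries the finite topology whose basis consists of the stars $U(x)=\{y\in G : x\subset y\}$. The unit ball $B(x)$ is the closure of $U(x)$ in this topology, i.e. $B(x)=\{y\in G : y\subset z \text{ for some } z\in G \text{ with } x\subset z\}$. *)

(* Defs.v *)
From mathcomp Require Import all_boot all_order all_algebra.
Set Implicit Arguments. Unset Strict Implicit. Unset Printing Implicit Defensive.
Import GRing.Theory Num.Theory.
Local Open Scope ring_scope.

Definition is_complex (T : finType) (G : {set {set T}}) : Prop :=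
  (forall y, y \in G -> y != set0) /\
  (forall (y z : {set T}), y \in G -> z \subset y -> z != set0 -> z \in G).

Definition wt (T : finType) (y : {set T}) : int := (-1) ^+ (#|y|.-1).

Definition wsum (T : finType) (A : {set {set T}}) : int := \sum_(y in A) wt y.

Definition star (T : finType) (G : {set {set T}}) (x : {set T}) : {set {set T}} :=
  [set y in G | x \subset y].

(* unit ball B(x) = closure of U(x) = { y in G | exists z in G, x ⊆ z /\ y ⊆ z } *)
Definition ball (T : finType) (G : {set {set T}}) (x : {set T}) : {set {set T}} :=
  [set y in G | [exists z in G, (x \subset z) && (y \subset z)]].

(* Main.v *)
Require Import Defs.
From mathcomp Require Import all_boot all_order all_algebra.
Import GRing.Theory.
Local Open Scope ring_scope.

Lemma wt_add (T : finType) (v : T) (y : {set T}) :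
  v \notin y -> y != set0 -> wt (v |: y) = - wt y.
Proof.
move=> vy y0; rewrite /wt cardsU1 vy /=.
have : (0 < #|y|)%N by rewrite card_gt0.
by case: #|y| => // k _; rewrite /= exprS mulN1r.
Qed.

Lemma ballP (T : finType) (G : {set {set T}}) (x y : {set T}) :
  reflect (y \in G /\ exists z, [/\ z \in G, x \subset z & y \subset z]) (y \in ball G x).
Proof.
rewrite /ball inE; apply: (iffP andP) => [[yG /existsP [z /and3P [zG xz yz]]]|[yG [z [zG xz yz]]]].
  by split=> //; exists z.
by split=> //; apply/existsP; exists z; rewrite zG xz yz.
Qed.

Theorem mainTheorem3 (T : finType) (G : {set {set T}}) :
  is_complex G -> forall x, x \in G -> wsum (ball G x) = 1%R.
Proof.
move=> [G0 Gsub] x xG.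
have [v vx] : exists v, v \in x by apply/set0Pn; exact: G0.
set B := ball G x.
have bP y : reflect (y \in G /\ exists z, [/\ z \in G, x \subset z & y \subset z]) (y \in B) := ballP _ _ _ _.
clearbody B.
set V := [set y : {set T} | v \in y].
have vB : [set v] \in B.
  apply/bP; split.
    apply: (Gsub x) => //; first by rewrite sub1set.
    by apply/set0Pn; exists v; rewrite set11.
  by exists x; split=> //; rewrite sub1set.
have E : B :&: V = [set v] |: ((fun y => v |: y) @: (B :\: V)).
  apply/setP => y; rewrite !inE; apply/andP/orP.
    move=> [yB vy]; have [->|yv] := eqVneq y [set v]; first by left.
    right; apply/imsetP; exists (y :\ v).
      move/bP: yB => [yG [z [zG xz yz]]].
      have ne : y :\ v != set0.
        apply: contra yv => /eqP e; apply/eqP/setP => w; rewrite inE.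
        apply/idP/eqP => [wy|->//]; apply/eqP; apply: contraT => wv.
        by have := in_set0 w; rewrite -e !inE wv wy.
      rewrite !inE eqxx /=; apply/bP; split.
        by apply: (Gsub y) => //; exact: subD1set.
      by exists z; split=> //; apply: subset_trans yz; exact: subD1set.
    by rewrite setD1K.
  move=> [/eqP ->|/imsetP [u]]; first by rewrite vB set11.
  rewrite !inE => /andP [vu uB] ->; rewrite !inE eqxx /= ?andbT.
  move/bP: uB => [uG [z [zG xz uz]]].
  have vz : v \in z by apply: (subsetP xz).
  have sub : v |: u \subset z by rewrite subUset sub1set vz uz.
  split=> //.
  apply/bP; split; last by exists z.
  apply: (Gsub z) => //; apply/set0Pn; exists v; exact: setU11.
rewrite /wsum (big_setID V) /= E big_setU1 /=; last first.
  apply/imsetP => [[u]]; rewrite !inE => /andP [vu uB] e.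
  move/bP: uB => [uG _]; move/negP: (G0 u uG); apply.
  apply/eqP/setP => w; rewrite inE; apply/negbTE; apply: contra vu => wu.
  have : w \in [set v] by rewrite e !inE wu orbT.
  by rewrite inE => /eqP <-.
rewrite big_imset /=; last first.
  move=> a b; rewrite !inE => /andP [va _] /andP [vb _] e.
  by rewrite -(setU1K va) -(setU1K vb) e.
rewrite /wt cards1 /= expr0.
rewrite (eq_bigr (fun y => - wt y)); last first.
  move=> y; rewrite !inE => /andP [vy yB]; rewrite -/(wt _) wt_add //.
  by move/bP: yB => [yG _]; apply: G0.
by rewrite sumrN subrK.
Qed.
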